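(* Let $\mathcal{I}$ be finite with $n=|\mathcal{I}|$, and let $X$ be a random variable uniformly distributed on $\mathcal{I}$. Then the answer-dependent pricing function $p(\mathbf{Q},E)=H(X)-H(X\mid\mathbf{Q}(X)=E)$, where $H$ is Shannon entropy (equivalently $p(\mathbf{Q},E)=\log n-\log|\mathcal{S}_{\mathbf{Q}}(E)|$), has no information arbitrage.
   Context: $\mathcal{I}$ is a set of database instances; queries are deterministic functions on $\mathcal{I}$; a query bundle is a finite tuple of queries from a language $\mathcal{L}$, evaluated componentwise; $B(\mathcal{L})$ is the set of bundles; $E$ ranges over $\{\mathbf{Q}(D):D\in\mathcal{I}\}$. $\mathcal{S}_{\mathbf{Q}}(E)=\{D'\in\mathcal{I}:\mathbf{Q}(D')=E\}$. $D\vdash\mathbf{Q}_2\twoheadrightarrow\mathbf{Q}_1$ means every $D'\in\mathcal{I}$ with $\mathbf{Q}_2(D')=\mathbf{Q}_2(D)$ satisfies $\mathbf{Q}_1(D')=\mathbf{Q}_1(D)$. $p$ has no information arbitrage if for every $D\in\mathcal{I}$ and $\mathbf{Q}_1,\mathbf{Q}_2\in B(\mathcal{L})$, $D\vdash\mathbf{Q}_2\twoheadrightarrow\mathbf{Q}_1$ implies $p(\mathbf{Q}_2,\mathbf{Q}_2(D))\ge p(\mathbf{Q}_1,\mathbf{Q}_1(D))$. *)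

(* Defs.v *)
From HB Require Import structures.
From mathcomp Require Import all_boot all_order all_algebra.
From mathcomp Require Import reals exp.
Set Implicit Arguments. Unset Strict Implicit. Unset Printing Implicit Defensive.
Import Order.TTheory GRing.Theory Num.Theory.
Local Open Scope ring_scope.

Section Pricing.
Variables (R : realType) (I : finType) (A : eqType).

(* A query is a deterministic function on database instances I with answers in A;
   a query bundle is a finite tuple (list) of queries, evaluated componentwise. *)
Definition bundle := seq (I -> A).

Definition eval_bundle (Q : bundle) (D : I) : seq A := map (fun q => q D) Q.

Definition in_B (L : pred (I -> A)) (Q : bundle) : bool := all L Q.

Definition consistent_set (Q : bundle) (E : seq A) : {set I} :=
  [set D' | eval_bundle Q D' == E].

Definition determines (D : I) (Q2 Q1 : bundle) : Prop :=
  forall D' : I, eval_bundle Q2 D' = eval_bundle Q2 D ->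
                 eval_bundle Q1 D' = eval_bundle Q1 D.

Definition no_info_arbitrage (L : pred (I -> A)) (p : bundle -> seq A -> R) : Prop :=
  forall (D : I) (Q1 Q2 : bundle), in_B L Q1 -> in_B L Q2 ->
    determines D Q2 Q1 -> p Q1 (eval_bundle Q1 D) <= p Q2 (eval_bundle Q2 D).

Definition entropy (P : I -> R) : R :=
  - \sum_(x : I) (if P x == 0 then 0 else P x * ln (P x)).

Definition unif_pmf : I -> R := fun _ => (#|I|%:R)^-1.

(* pmf of X conditioned on the event Q(X) = E *)
Definition cond_pmf (Q : bundle) (E : seq A) : I -> R :=
  fun x => \sum_(y : I | eval_bundle Q y == E) (if y == x then unif_pmf y else 0)
           / \sum_(y : I | eval_bundle Q y == E) unif_pmf y.

Definition entropy_price (Q : bundle) (E : seq A) : R :=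
  entropy unif_pmf - entropy (cond_pmf Q E).

End Pricing.

(* Main.v *)
Require Import Defs.
From HB Require Import structures.
From mathcomp Require Import all_boot all_order all_algebra.
From mathcomp Require Import reals exp.
Import Order.TTheory GRing.Theory Num.Theory.
Local Open Scope ring_scope.

Lemma cond_entropy (R : realType) (I : finType) (A : eqType) (Q : bundle I A) (D : I) :
  entropy (@cond_pmf R I A Q (eval_bundle Q D)) =
  ln (#|consistent_set Q (eval_bundle Q D)|%:R).
Proof.
set E := eval_bundle Q D; set S := consistent_set Q E.
have kpos : (0 < #|S|)%N by apply/card_gt0P; exists D; rewrite inE.
have npos : (0 < #|I|)%N by apply/card_gt0P; exists D.
have kR : (#|S|%:R : R) != 0 by rewrite pnatr_eq0 -lt0n.
have nR : (#|I|%:R : R) != 0 by rewrite pnatr_eq0 -lt0n.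
have den : \sum_(y | eval_bundle Q y == E) unif_pmf R y = #|S|%:R * (#|I|%:R)^-1.
  rewrite (eq_bigl (fun y => y \in S)); last by move=> y; rewrite inE.
  by rewrite sumr_const mulr_natl.
have cE : forall x, cond_pmf R Q E x = if x \in S then (#|S|%:R)^-1 else 0.
  move=> x; rewrite /cond_pmf den.
  case: ifP => xS.
    rewrite (bigD1 x) /=; last by rewrite inE in xS.
    rewrite eqxx big1 ?addr0; last by move=> y /andP [_ /negbTE ->]; rewrite mul0r.
    by rewrite /unif_pmf invfM invrK mulrCA mulVf // mulr1.
  rewrite big1 // => y Py; case: eqP => [yx|]; last by rewrite mul0r.
  by move: xS; rewrite inE -yx Py.
rewrite /entropy.
rewrite (eq_bigr (fun x => if x \in S then (#|S|%:R)^-1 * ln ((#|S|%:R : R)^-1) else 0)); last first.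
  move=> x _; rewrite cE; case: (x \in S) => //.
  by rewrite invr_eq0 (negbTE kR).
  by rewrite eqxx.
rewrite -big_mkcond sumr_const -mulrnAl -(mulr_natr (_^-1)) mulVf // mul1r lnV ?opprK //.
by rewrite posrE ltr0n.
Qed.

Theorem lemma7 (R : realType) (I : finType) (A : eqType) (L : pred (I -> A)) :
  no_info_arbitrage L (@entropy_price R I A).
Proof.
move=> D Q1 Q2 _ _ det.
rewrite /entropy_price !cond_entropy lerD2l lerN2.
have s1 : (0 < #|consistent_set Q1 (eval_bundle Q1 D)|)%N
  by apply/card_gt0P; exists D; rewrite inE.
have s2 : (0 < #|consistent_set Q2 (eval_bundle Q2 D)|)%N
  by apply/card_gt0P; exists D; rewrite inE.
rewrite ler_ln ?posrE ?ltr0n // ler_nat.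
apply: subset_leq_card; apply/subsetP => x; rewrite !inE => /eqP h.
by rewrite det.
Qed.
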